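(* Let $N,n_{\mathrm{el}}\ge1$, masses $m_1,\dots,m_N>0$, $M=\mathrm{diag}(m_1I_3,\dots,m_NI_3)$, $V_{\mathrm{ext}}:\mathbb{R}^{3N}\to\mathbb{R}$ continuously differentiable, $h>0$. For $i=1,\dots,n_{\mathrm{el}}$ let $k_i>0$, $l_{0,i}>0$, $a_{ij}\in\mathbb{R}$, define $\tilde C_i(q)=\frac{\bar q_i\cdot\bar q_i}{l_{0,i}^2}$ with $\bar q_i=\sum_{j=1}^Na_{ij}q_j$ ($q=(q_1,\dots,q_N)$, $q_j\in\mathbb{R}^3$), $V_{\mathrm{int},i}(c)=\frac{k_il_{0,i}}{4}(c-\ln c-1)$ for $c>0$. Define the midpoint (Gonzalez) discrete gradient $\overline{\nabla}V_{\mathrm{ext}}(q,q')=\nabla V_{\mathrm{ext}}(\tfrac{q+q'}2)+\frac{V_{\mathrm{ext}}(q')-V_{\mathrm{ext}}(q)-\nabla V_{\mathrm{ext}}(\frac{q+q'}2)\cdot(q'-q)}{|q'-q|^2}(q'-q)$ for $q'\neq q$ and $\nabla V_{\mathrm{ext}}(q)$ for $q'=q$, and the Greenspan discrete derivative $\overline{\nabla}V_{\mathrm{int}}(C,C')$ componentwise by $\frac{V_{\mathrm{int},i}(C_i')-V_{\mathrm{int},i}(C_i)}{C_i'-C_i}$ if $C_i'\ne C_i$ and $V_{\mathrm{int},i}'(\frac{C_i+C_i'}2)$ otherwise. Suppose $(q^n,v^n,C^n)$, $(q^{n+1},v^{n+1},C^{n+1})$ (positive strains) satisfy, with midpoint values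 $x^{n+1/2}=\frac12(x^n+x^{n+1})$, $$q^{n+1}-q^n=h\,v^{n+1/2},\quad M(v^{n+1}-v^n)=-h\big(\overline{\nabla}V_{\mathrm{ext}}(q^n,q^{n+1})+D\tilde C(q^{n+1/2})^{\mathrm T}\overline{\nabla}V_{\mathrm{int}}(C^n,C^{n+1})\big),\quad C^{n+1}-C^n=h\,D\tilde C(q^{n+1/2})v^{n+1/2}.$$ Let $L^m=\sum_{k=1}^Nq_k^m\times m_kv_k^m$ for $m=n,n+1$. If there is $\bar b\in\mathbb{R}^3$ such that the $k$-th three-dimensional block of $\overline{\nabla}V_{\mathrm{ext}}(q^n,q^{n+1})$ equals $-\bar b$ for every $k=1,\dots,N$, then $(L^{n+1}-L^n)\cdot\bar b=0$.
   Context: $D\tilde C(q)$ is the Jacobian of $\tilde C=(\tilde C_1,\dots,\tilde C_{n_{\mathrm{el}}})$. The scheme is the input-free midpoint discrete-gradient time discretization of the port-Hamiltonian model of $N$ point masses connected by $n_{\mathrm{el}}$ hyperelastic springs, with state (positions $q$, velocities $v$, strains $C$). *)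

(* Defs.v *)
From HB Require Import structures.
From mathcomp Require Import all_boot all_order all_algebra.
From mathcomp Require Import all_classical all_reals all_analysis.
Set Implicit Arguments. Unset Strict Implicit. Unset Printing Implicit Defensive.
Import Order.TTheory GRing.Theory Num.Theory.
Import numFieldNormedType.Exports.
Local Open Scope ring_scope.

(* Positions/velocities q = (q_1,...,q_N), q_j in R^3, are stored as N x 3
   matrices (row j = q_j); this is R^{3N}. *)

Definition mdot {R : pzRingType} {m n} (A B : 'M[R]_(m, n)) : R :=
  \sum_i \sum_j A i j * B i j.

Definition mid {R : realType} {m n} (A B : 'M[R]_(m, n)) : 'M[R]_(m, n) :=
  2^-1 *: (A + B).

Definition partial {R : realType} {m n} (f : 'M[R]_(m, n) -> R)
  (x : 'M[R]_(m, n)) (i : 'I_m) (j : 'I_n) : R :=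
  'D_(delta_mx i j) f x.

Definition grad {R : realType} {m n} (f : 'M[R]_(m, n) -> R)
  (x : 'M[R]_(m, n)) : 'M[R]_(m, n) :=
  \matrix_(i, j) partial f x i j.

Definition C1_fun {R : realType} {m n} (f : 'M[R]_(m, n) -> R) : Prop :=
  forall i j, (forall x, derivable f x (delta_mx i j)) /\
              continuous (fun x => partial f x i j).

Definition disc_grad_ext {R : realType} {m n} (f : 'M[R]_(m, n) -> R)
  (q q' : 'M[R]_(m, n)) : 'M[R]_(m, n) :=
  if q' == q then grad f q
  else grad f (mid q q') +
       ((f q' - f q - mdot (grad f (mid q q')) (q' - q))
          / mdot (q' - q) (q' - q)) *: (q' - q).

Definition Vint {R : realType} (kap l0 c : R) : R :=
  kap * l0 / 4 * (c - ln c - 1).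

Definition disc_grad_int {R : realType} {nel : nat} (kap l0 : 'I_nel -> R)
  (C C' : 'I_nel -> R) (i : 'I_nel) : R :=
  if C' i != C i then
    (Vint (kap i) (l0 i) (C' i) - Vint (kap i) (l0 i) (C i)) / (C' i - C i)
  else derive1 (Vint (kap i) (l0 i)) ((C i + C' i) / 2).

Definition Ctilde {R : realType} {nel N : nat} (A : 'M[R]_(nel, N))
  (l0 : 'I_nel -> R) (i : 'I_nel) (q : 'M[R]_(N, 3)) : R :=
  mdot (row i (A *m q)) (row i (A *m q)) / (l0 i) ^+ 2.

Definition jac {R : realType} {nel N : nat} (Ct : 'I_nel -> 'M[R]_(N, 3) -> R)
  (q : 'M[R]_(N, 3)) (i : 'I_nel) (j : 'I_N) (d : 'I_3) : R :=
  partial (Ct i) q j d.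

Definition jacT_apply {R : realType} {nel N : nat}
  (Ct : 'I_nel -> 'M[R]_(N, 3) -> R) (q : 'M[R]_(N, 3)) (w : 'I_nel -> R)
  : 'M[R]_(N, 3) :=
  \matrix_(j, d) \sum_i jac Ct q i j d * w i.

Definition jac_apply {R : realType} {nel N : nat}
  (Ct : 'I_nel -> 'M[R]_(N, 3) -> R) (q : 'M[R]_(N, 3)) (v : 'M[R]_(N, 3))
  (i : 'I_nel) : R :=
  \sum_j \sum_d jac Ct q i j d * v j d.

Definition cross {R : pzRingType} (u v : 'rV[R]_3) : 'rV[R]_3 :=
  let c (w : 'rV[R]_3) (k : nat) := w ord0 (inord k) in
  \row_(k < 3) match val k with
               | 0 => c u 1 * c v 2 - c u 2 * c v 1
               | 1 => c u 2 * c v 0 - c u 0 * c v 2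
               | _ => c u 0 * c v 1 - c u 1 * c v 0
               end.

Definition angmom {R : pzRingType} {N : nat} (m : 'I_N -> R)
  (q v : 'M[R]_(N, 3)) : 'rV[R]_3 :=
  \sum_(k < N) cross (row k q) (m k *: row k v).

(* Main.v *)
Require Import Defs.
From HB Require Import structures.
From mathcomp Require Import all_boot all_order all_algebra.
From mathcomp Require Import all_classical all_reals all_analysis.
From mathcomp Require Import ring.
Import Order.TTheory GRing.Theory Num.Theory.
Import numFieldNormedType.Exports.
Local Open Scope ring_scope.

Lemma quad_derive (R : realType) (V : normedModType R) (f : V -> R) (a v : V) (c1 c2 : R) :
  (forall t : R, f (t *: v + a) = f a + t * c1 + t ^+ 2 * c2) -> 'D_v f a = c1.
Proof.
move=> Hf; rewrite /derive; apply: cvg_lim => //.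
have L : ((fun h : R => c1 + h * c2) @ dnbhs (0:R) --> c1)%classic.
  suff : ((fun h : R => c1 + h * c2) @ dnbhs (0:R) --> c1 + 0 * c2)%classic by rewrite mul0r addr0.
  apply: cvgD; first exact: cvg_cst.
  apply: cvgMr_tmp.
  exact: nbhs_dnbhs.
move: L; apply: cvg_trans; apply: near_eq_cvg; near=> h.
have h0 : h != 0 by near: h; exact: nbhs_dnbhs_neq.
by rewrite /= Hf /GRing.scale /=; field.
Unshelve. all: by end_near.
Qed.

Section Aux.
Variable R : realType.

Lemma mdotDl {m n} (x y z : 'M[R]_(m, n)) : mdot (x + y) z = mdot x z + mdot y z.
Proof.
rewrite /mdot -big_split /=; apply: eq_bigr => i _.
rewrite -big_split /=; apply: eq_bigr => j _; by rewrite mxE mulrDl.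
Qed.

Lemma mdotZl {m n} k (x z : 'M[R]_(m, n)) : mdot (k *: x) z = k * mdot x z.
Proof.
rewrite /mdot mulr_sumr; apply: eq_bigr => i _.
rewrite mulr_sumr; apply: eq_bigr => j _; by rewrite mxE mulrA.
Qed.

Lemma mdotC {m n} (x z : 'M[R]_(m, n)) : mdot x z = mdot z x.
Proof.
rewrite /mdot; apply: eq_bigr => i _; apply: eq_bigr => j _; by rewrite mulrC.
Qed.

Lemma mdot_expand {m n} t (r s : 'M[R]_(m, n)) :
  mdot (t *: s + r) (t *: s + r) = mdot r r + t * (2 * mdot r s) + t ^+ 2 * mdot s s.
Proof.
have Dr : forall x y z : 'M[R]_(m, n), mdot x (y + z) = mdot x y + mdot x z.
  by move=> x y z; rewrite mdotC mdotDl !(mdotC _ x).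
have Zr : forall k (x z : 'M[R]_(m, n)), mdot x (k *: z) = k * mdot x z.
  by move=> k x z; rewrite mdotC mdotZl mdotC.
rewrite mdotDl !Dr !mdotZl !Zr (mdotC s r); ring.
Qed.

Lemma Ctilde_jac nel N (A : 'M[R]_(nel, N)) (l0 : 'I_nel -> R) i q j d (Hl : l0 i != 0) :
  jac (Ctilde A l0) q i j d = 2 * ((A *m q) i d * A i j) / l0 i ^+ 2.
Proof.
rewrite /jac /partial.
set r := row i (A *m q). set s := row i (A *m delta_mx j d).
have Hse : forall y, s ord0 y = A i j * (y == d)%:R.
  move=> y; rewrite /s !mxE (bigD1 j) //= big1 ?addr0.
    by rewrite mxE eqxx.
  by move=> k /negPf Hk; rewrite mxE Hk mulr0.
have Hs : mdot r s = (A *m q) i d * A i j.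
  rewrite /mdot big_ord1 (bigD1 d) //= big1 ?addr0.
    by rewrite Hse eqxx mulr1 /r mxE.
  by move=> y /negPf Hy; rewrite Hse Hy !mulr0.
apply: (@quad_derive _ _ _ _ _ _ (mdot s s / l0 i ^+ 2)) => t.
rewrite /Ctilde.
have -> : row i (A *m (t *: delta_mx j d + q)) = t *: s + r.
  by apply/rowP => y; rewrite mulmxDr -scalemxAr /r /s !mxE.
by rewrite mdot_expand Hs; field.
Qed.

Lemma mdot3 (x y : 'rV[R]_3) : mdot x y =
  x ord0 (inord 0) * y ord0 (inord 0) + x ord0 (inord 1) * y ord0 (inord 1)
  + x ord0 (inord 2) * y ord0 (inord 2).
Proof.
rewrite /mdot big_ord1 !big_ord_recl big_ord0 addr0 addrA.
have E0 : (ord0 : 'I_3) = inord 0 by apply/val_inj; rewrite /= inordK.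
have E1 : (lift ord0 ord0 : 'I_3) = inord 1 by apply/val_inj; rewrite /= inordK.
have E2 : (lift ord0 (lift ord0 ord0) : 'I_3) = inord 2 by apply/val_inj; rewrite /= inordK.
by rewrite E2 E1 E0.
Qed.

Lemma antisym_sum nel N (A : 'M[R]_(nel, N)) (Q : 'M[R]_(N, 3)) (c : 'I_nel -> R) a e :
  \sum_k (Q k a * (\sum_i (A i k * (A *m Q) i e * c i))
          - Q k e * (\sum_i (A i k * (A *m Q) i a * c i))) = 0.
Proof.
under eq_bigr => k _ do rewrite !mulr_sumr -sumrB.
rewrite exchange_big /=; apply: big1 => i _.
rewrite sumrB.
have -> : \sum_k Q k a * (A i k * (A *m Q) i e * c i)
   = (\sum_k A i k * Q k a) * ((A *m Q) i e * c i).
  by rewrite mulr_suml; apply: eq_bigr => k _; ring.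
have -> : \sum_k Q k e * (A i k * (A *m Q) i a * c i)
   = (\sum_k A i k * Q k e) * ((A *m Q) i a * c i).
  by rewrite mulr_suml; apply: eq_bigr => k _; ring.
rewrite !mxE; ring.
Qed.

Lemma mdot_suml {m n} I (r : seq I) (F : I -> 'M[R]_(m, n)) z :
  mdot (\sum_(k <- r) F k) z = \sum_(k <- r) mdot (F k) z.
Proof.
apply: (big_ind2 (fun X y => mdot X z = y)).
- by rewrite /mdot big1 // => i _; rewrite big1 // => j _; rewrite mxE mul0r.
- by move=> x1 y1 x2 y2 <- <-; rewrite mdotDl.
- by [].
Qed.

Lemma val_inord3 k : (k < 3)%N -> val (inord k : 'I_3) = k.
Proof. exact: inordK. Qed.

Lemma crossE (u v : 'rV[R]_3) (y : 'I_3) : cross u v ord0 y =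
  match val y with
  | 0 => u ord0 (inord 1) * v ord0 (inord 2) - u ord0 (inord 2) * v ord0 (inord 1)
  | 1 => u ord0 (inord 2) * v ord0 (inord 0) - u ord0 (inord 0) * v ord0 (inord 2)
  | _ => u ord0 (inord 0) * v ord0 (inord 1) - u ord0 (inord 1) * v ord0 (inord 0)
  end.
Proof. by rewrite /cross mxE. Qed.

Lemma crosssum_zero nel N (A : 'M[R]_(nel, N)) (Q P : 'M[R]_(N, 3)) (c : 'I_nel -> R)
  (HP : forall k d, P k d = \sum_i (A i k * (A *m Q) i d * c i)) :
  \sum_k cross (row k Q) (row k P) = 0.
Proof.
apply/rowP => y; rewrite summxE [RHS]mxE.
under eq_bigr => k _ do rewrite crossE.
case: y => -[|[|[|//]]] Hy /=;
  under eq_bigr => k _ do rewrite !mxE !HP;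
  exact: antisym_sum.
Qed.

End Aux.

Theorem mainTheorem4 (R : realType) (N nel : nat)
  (HN : (0 < N)%N) (Hnel : (0 < nel)%N)
  (m : 'I_N -> R) (Hm : forall k, 0 < m k)
  (Vext : 'M[R]_(N, 3) -> R) (HV : C1_fun Vext)
  (h : R) (Hh : 0 < h)
  (kap l0 : 'I_nel -> R) (Hkap : forall i, 0 < kap i) (Hl0 : forall i, 0 < l0 i)
  (A : 'M[R]_(nel, N))
  (q0 q1 v0 v1 : 'M[R]_(N, 3)) (C0 C1 : 'I_nel -> R)
  (HC0 : forall i, 0 < C0 i) (HC1 : forall i, 0 < C1 i)
  (Hq : q1 - q0 = h *: mid v0 v1)
  (Hv : diag_mx (\row_k m k) *m (v1 - v0) =
        - (h *: (disc_grad_ext Vext q0 q1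
                 + jacT_apply (Ctilde A l0) (mid q0 q1) (disc_grad_int kap l0 C0 C1))))
  (HC : forall i, C1 i - C0 i = h * jac_apply (Ctilde A l0) (mid q0 q1) (mid v0 v1) i)
  (b : 'rV[R]_3)
  (Hb : forall k : 'I_N, row k (disc_grad_ext Vext q0 q1) = - b) :
  mdot (angmom m q1 v1 - angmom m q0 v0) b = 0.
Proof.
have l0n : forall i, l0 i != 0 by move=> i; exact: lt0r_neq0.
have mn : forall k, m k != 0 by move=> k; exact: lt0r_neq0.
set w := disc_grad_int kap l0 C0 C1 in Hv.
set G := disc_grad_ext Vext q0 q1 in Hv Hb.
set Q := mid q0 q1 in Hv.
set P := jacT_apply (Ctilde A l0) Q w in Hv.
have HP : forall k d, P k d = \sum_i (A i k * (A *m Q) i d * (2 * w i / l0 i ^+ 2)).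
  move=> k d; rewrite /P mxE; apply: eq_bigr => i _.
  by rewrite Ctilde_jac //; field.
have Hbe : forall k d, G k d = - b ord0 d.
  by move=> k d; move/rowP: (Hb k) => /(_ d); rewrite !mxE.
clearbody P G.
have Hqe : forall k d, q1 k d = q0 k d + h * (2^-1 * (v0 k d + v1 k d)).
  move=> k d; move/matrixP: Hq => /(_ k d); rewrite /mid !mxE => H.
  move: H; move: (v1 k d) (v0 k d) (q1 k d) (q0 k d) => x y p c H.
  by rewrite -H; ring.
have Hve : forall k d, v1 k d = v0 k d - h * (- b ord0 d + P k d) / m k.
  move=> k d; move/matrixP: Hv => /(_ k d); rewrite mul_diag_mx !mxE Hbe => H.
  move: H; move: (v1 k d) (v0 k d) (P k d) (b ord0 d) => x y p c H.
  have -> : x = y + (m k * (x - y)) / m k by field.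
  by rewrite H; field.
have Hk : forall k, cross (row k q1) (m k *: row k v1) - cross (row k q0) (m k *: row k v0)
    = cross (row k Q) (h *: b) - h *: cross (row k Q) (row k P).
  move=> k; apply/rowP => y; rewrite /cross !mxE /Q /mid.
  case: y => -[|[|[|//]]] Hy /=; rewrite !Hqe !Hve; field; exact: mn.
rewrite /angmom -sumrB.
under eq_bigr => k _ do rewrite Hk.
rewrite sumrB -scaler_sumr (@crosssum_zero _ _ _ _ _ _ _ HP) scaler0 subr0 mdot_suml.
apply: big1 => k _.
rewrite mdot3 !crossE !val_inord3 //= !mxE; ring.
Qed.
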